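(* Let $n,t,t'$ be positive integers with $t-1\ge t'$. Then $$R(\mathcal{C}_{t,t-1,t'},Q_n)=n+t+2.$$
   Context: $C_t$ denotes a chain on $t$ elements. The parallel composition $P_1+P_2+P_3$ of posets is the disjoint union of copies of $P_1,P_2,P_3$ where elements of different copies are incomparable. $\mathcal{C}_{t_1,t_2,t_3}=C_{t_1}+C_{t_2}+C_{t_3}$. $Q_n$ is the Boolean lattice of all subsets of an $n$-element set ordered by inclusion. A copy of $P$ in $Q$ is an induced subposet of $Q$ isomorphic to $P$. $R(P_1,P_2)$ is the smallest integer $N$ such that every blue/red coloring of the elements of $Q_N$ contains an all-blue copy of $P_1$ or an all-red copy of $P_2$. *)

(* Defs.v *)
From mathcomp Require Import all_boot.
Set Implicit Arguments. Unset Strict Implicit. Unset Printing Implicit Defensive.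

(* A copy of (T, leT) in the Boolean lattice Q_N (subsets of 'I_N ordered  *)
(* by inclusion) is an injective map f with leT x y <-> f x \subset f y,   *)
(* i.e. an induced subposet of Q_N isomorphic to (T, leT).                 *)
Definition is_copy (T : finType) (leT : rel T) (N : nat)
  (f : T -> {set 'I_N}) : Prop :=
  injective f /\ forall x y : T, leT x y = (f x \subset f y).

Definition Qn_le (n : nat) : rel {set 'I_n} := fun A B => A \subset B.

(* C_{t1,t2,t3} = C_t1 + C_t2 + C_t3 : disjoint union of three chains. *)
Definition chain3 (t1 t2 t3 : nat) : finType := ('I_t1 + 'I_t2 + 'I_t3)%type.

Definition chain3_le (t1 t2 t3 : nat) : rel (chain3 t1 t2 t3) :=
  fun x y =>
    match x, y with
    | inl (inl a), inl (inl b) => (a <= b)%N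
    | inl (inr a), inl (inr b) => (a <= b)%N
    | inr a, inr b => (a <= b)%N
    | _, _ => false
    end.

(* Every blue/red colouring of Q_N (c X = true means X is blue) contains an *)
(* all-blue copy of P1 or an all-red copy of P2.                            *)
Definition ramsey_prop (T1 : finType) (le1 : rel T1)
  (T2 : finType) (le2 : rel T2) (N : nat) : Prop :=
  forall c : {set 'I_N} -> bool,
    (exists f : T1 -> {set 'I_N}, is_copy le1 f /\ forall x, c (f x))
    \/ (exists g : T2 -> {set 'I_N}, is_copy le2 g /\ forall x, ~~ c (g x)).

Definition is_ramsey_number (T1 : finType) (le1 : rel T1)
  (T2 : finType) (le2 : rel T2) (R : nat) : Prop :=
  ramsey_prop le1 le2 R /\ forall N, (N < R)%N -> ~ ramsey_prop le1 le2 N.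

(* Main.v *)
Require Import Defs.
From mathcomp Require Import all_boot zify.
Set Implicit Arguments. Unset Strict Implicit. Unset Printing Implicit Defensive.

Definition emb (n N : nat) (h : n <= N) (S : {set 'I_n}) : {set 'I_N} :=
  [set widen_ord h x | x in S].

Lemma widen_inj (n N : nat) (h : n <= N) : injective (widen_ord h).
Proof. by move=> x y /(congr1 val) /= /val_inj. Qed.

Lemma mem_emb (n N : nat) (h : n <= N) S x :
  (widen_ord h x \in emb h S) = (x \in S).
Proof. by rewrite mem_imset //; apply: widen_inj. Qed.

Fixpoint Pb (n N : nat) (h : n <= N) (c : {set 'I_N} -> bool)
  (Y : nat -> {set 'I_N}) (j : nat) (S : {set 'I_n}) {struct j} : bool :=
  if j is j'.+1 then
    [exists S' : {set 'I_n}, [&& S' \subset S, Pb h c Y j' S' & c (emb h S' :|: Y j')]]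
  else true.

Fixpoint hmax (n N : nat) (h : n <= N) (c : {set 'I_N} -> bool)
  (Y : nat -> {set 'I_N}) (j : nat) (S : {set 'I_n}) {struct j} : nat :=
  if j is j'.+1 then (if Pb h c Y j S then j else hmax h c Y j' S) else 0.

Section GMT.
Lemma Pb_mono n N (h : n <= N) c Y j (S T : {set 'I_n}) :
  S \subset T -> Pb h c Y j S -> Pb h c Y j T.
Proof.
case: j => [//|j] ST /existsP [S' /and3P [S'S P1 P2]]; apply/existsP; exists S'.
by rewrite P1 P2 (subset_trans S'S ST).
Qed.

Lemma hmax_P n N (h : n <= N) c Y j S : Pb h c Y (hmax h c Y j S) S.
Proof. elim: j => [//|j IH] /=; by case: ifP. Qed.

Lemma hmax_le n N (h : n <= N) c Y j S : hmax h c Y j S <= j.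
Proof. elim: j => [//|j IH] /=; case: ifP => // _; exact: leqW. Qed.

Lemma hmax_max n N (h : n <= N) c Y j S i :
  i <= j -> Pb h c Y i S -> i <= hmax h c Y j S.
Proof.
elim: j => [|j IH]; first by rewrite leqn0 => /eqP ->.
rewrite /=; case: ifP => [_ //|Hn]; rewrite leq_eqVlt => /orP [/eqP Ei|]; last exact: IH.
by rewrite Ei /= Hn.
Qed.

Lemma Pb_chain n N (h : n <= N) c Y j S : Pb h c Y j S ->
  exists F : nat -> {set 'I_n}, (forall i i', i <= i' -> F i \subset F i') /\
    (forall i, i < j -> c (emb h (F i) :|: Y i)) /\ (forall i, F i \subset S).
Proof.
elim: j S => [|j IH] S.
  by move=> _; exists (fun _ => S); split => // i i' _.
move=> /existsP [S' /and3P [S'S P1 P2]].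
have [F [Fm [Fb FS]]] := IH S' P1.
exists (fun i => if i < j then F i else S'); split; [|split].
- move=> i i' ii'; case: ifP => hi; case: ifP => hi'.
  + exact: Fm.
  + exact: FS.
  + by exfalso; move: hi hi' ii'; lia.
  + exact: subxx.
- move=> i; rewrite ltnS leq_eqVlt => /orP [/eqP ->|hi]; first by rewrite ltnn.
  by rewrite hi; apply: Fb.
- move=> i; case: ifP => _; last by [].
  exact: subset_trans (FS i) S'S.
Qed.
End GMT.

Lemma GMT (n N : nat) (h : n <= N) (c : {set 'I_N} -> bool) (Y : nat -> {set 'I_N}) (K : nat)
  (Ymono : forall i j, i <= j -> Y i \subset Y j)
  (Ydisj : forall i (x : 'I_N), x \in Y i -> n <= x) :
  (exists g : {set 'I_n} -> {set 'I_N}, is_copy (@Qn_le n) g /\ forall S, ~~ c (g S))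
  \/ (exists F : nat -> {set 'I_n}, (forall i j, i <= j -> F i \subset F j) /\
        (forall i, i <= K -> c (emb h (F i) :|: Y i))).
Proof.
case: (boolP [exists S, Pb h c Y K.+1 S]) => [/existsP [S HS]|HN].
  right; have [F [Fm [Fb _]]] := Pb_chain HS; exists F; split => // i hi; exact: Fb.
left.
pose hS := hmax h c Y K.
pose g S := emb h S :|: Y (hS S).
have hmono (S T : {set 'I_n}) : S \subset T -> hS S <= hS T.
  move=> ST; apply: hmax_max; first exact: hmax_le.
  exact: Pb_mono ST (hmax_P _ _ _ _ _).
have refl (S T : {set 'I_n}) : g S \subset g T -> S \subset T.
  move=> gST; apply/subsetP => x xS.
  have : widen_ord h x \in g T.
    by apply: (subsetP gST); rewrite in_setU mem_emb xS.
  rewrite in_setU mem_emb => /orP [//|/Ydisj]; have := ltn_ord x; simpl; lia.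
have le (S T : {set 'I_n}) : Qn_le S T = (g S \subset g T).
  apply/idP/idP; last exact: refl.
  by move=> ST; apply: setUSS; [apply: imsetS|apply: Ymono; apply: hmono].
exists g; split; first split.
- move=> S T E; apply/eqP; rewrite eqEsubset; apply/andP; split; apply: refl; by rewrite E.
- exact: le.
- move=> S; apply/negP => Hc.
  have PS : Pb h c Y (hS S).+1 S.
    by apply/existsP; exists S; rewrite subxx Hc andbT; apply: hmax_P.
  have := hmax_le h c Y K S; rewrite -/(hS S) leq_eqVlt => /orP [/eqP E|lt].
    by move/negP: HN; apply; apply/existsP; exists S; rewrite -E.
  by have := hmax_max lt PS; rewrite -/(hS S) ltnn.
Qed.

Definition Yc (n N s i : nat) : {set 'I_N} :=
  [set x : 'I_N | (n <= x) && ((x - n == s) || (0 < x - n <= i))].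

Lemma emb_lt (n N : nat) (h : n <= N) S (x : 'I_N) : x \in emb h S -> x < n.
Proof. by move=> /imsetP [y _ ->] /=. Qed.

Lemma Yc_mono n N s i j : i <= j -> Yc n N s i \subset Yc n N s j.
Proof.
move=> ij; apply/subsetP => x; rewrite !inE => /andP [-> /orP [->//|/andP [h1 h2]]].
by rewrite h1 (leq_trans h2 ij) orbT.
Qed.

Lemma Yc_disj n N s i (x : 'I_N) : x \in Yc n N s i -> n <= x.
Proof. by rewrite inE => /andP []. Qed.

Lemma Lk1 n N (h : n <= N) (S S' : {set 'I_n}) s s' i i' : n + s < N -> s != s' -> ~~ (0 < s <= i') ->
  ~~ (emb h S :|: Yc n N s i \subset emb h S' :|: Yc n N s' i').
Proof.
move=> hs ss' si; apply/subsetPn; exists (Ordinal hs).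
  by rewrite in_setU inE /= leq_addr addKn eqxx orbT.
rewrite in_setU inE /= leq_addr addKn (negbTE ss') (negbTE si) /= orbF.
by apply/negP => /emb_lt /=; rewrite ltnNge leq_addr.
Qed.

Lemma Lk2 n N (h : n <= N) (S S' : {set 'I_n}) s i i' :
  emb h S :|: Yc n N s i \subset emb h S' :|: Yc n N s i' ->
  i != s -> n + i < N -> 0 < i -> i <= i'.
Proof.
move=> sub iS hi i0; rewrite leqNgt; apply/negP => lt.
have : Ordinal hi \in emb h S :|: Yc n N s i.
  by rewrite in_setU inE /= leq_addr addKn i0 leqnn !orbT.
move/(subsetP sub); rewrite in_setU inE /= leq_addr addKn (negbTE iS) /=.
rewrite i0 /= leqNgt lt orbF => /emb_lt /=; rewrite ltnNge leq_addr //.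
Qed.

Lemma Lk3 n N (h : n <= N) (S S' : {set 'I_n}) s i i' : i <= i' -> S \subset S' ->
  emb h S :|: Yc n N s i \subset emb h S' :|: Yc n N s i'.
Proof. by move=> ii SS; apply: setUSS; [apply: imsetS|apply: Yc_mono]. Qed.

Lemma chain3_anti t1 t2 t3 (x y : chain3 t1 t2 t3) :
  chain3_le x y -> chain3_le y x -> x = y.
Proof.
case: x => [[a|a]|a]; case: y => [[b|b]|b] //= h1 h2;
  by do ?congr (inl _); do ?congr (inr _); apply: val_inj; apply/eqP; rewrite eqn_leq h1 h2.
Qed.

Lemma upper (n tA tB tC : nat) : tB <= tA -> tC <= tA ->
  ramsey_prop (@chain3_le tA tB tC) (@Qn_le n) (n + tA + 2).
Proof.
move=> hB hC c.
have h : n <= n + tA + 2 by lia.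
set N := n + tA + 2 in h c *.
have G s := @GMT n N h c (Yc n N s) tA (@Yc_mono n N s) (@Yc_disj n N s).
case: (G 0) => [Hg|[F0 [F0m F0b]]]; first by right.
case: (G tA) => [Hg|[F1 [F1m F1b]]]; first by right.
case: (G tA.+1) => [Hg|[F2 [F2m F2b]]]; first by right.
left.
pose f (x : chain3 tA tB tC) := match x with
  | inl (inl a) => emb h (F0 a) :|: Yc n N 0 a
  | inl (inr b) => emb h (F1 b) :|: Yc n N tA b
  | inr d => emb h (F2 d) :|: Yc n N tA.+1 d end.
have le x y : chain3_le x y = (f x \subset f y).
  case: x => [[a|a]|a]; case: y => [[b|b]|b] /=;
   have := ltn_ord a; have := ltn_ord b; move=> hb ha.
  - apply/idP/idP => H; first by apply: Lk3 => //; apply: F0m.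
    case: (posnP a) => [->//|a0]; apply: (Lk2 H) => //; rewrite /N; lia.
  - by apply/esym/negbTE/Lk1; rewrite /N; lia.
  - by apply/esym/negbTE/Lk1; rewrite /N; lia.
  - by apply/esym/negbTE/Lk1; rewrite /N; lia.
  - apply/idP/idP => H; first by apply: Lk3 => //; apply: F1m.
    case: (posnP a) => [->//|a0]; apply: (Lk2 H) => //; rewrite /N; lia.
  - by apply/esym/negbTE/Lk1; rewrite /N; lia.
  - by apply/esym/negbTE/Lk1; rewrite /N; lia.
  - by apply/esym/negbTE/Lk1; rewrite /N; lia.
  - apply/idP/idP => H; first by apply: Lk3 => //; apply: F2m.
    case: (posnP a) => [->//|a0]; apply: (Lk2 H) => //; rewrite /N; lia.
exists f; split; first split.
- move=> x y E; apply: chain3_anti; by rewrite le E subxx.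
- exact: le.
- case=> [[a|a]|a] /=; [apply: F0b|apply: F1b|apply: F2b]; have := ltn_ord a; lia.
Qed.

Lemma incr_chain (m : nat) (g : nat -> nat) :
  (forall i, i < m -> g i < g i.+1) -> forall i, i <= m -> g 0 + i <= g i.
Proof.
move=> H; elim=> [|i IH] hi; first by rewrite addn0.
have := H i hi; have := IH (ltnW hi); lia.
Qed.

Lemma lower (n N tA tB tC : nat) : N <= n + tB + 3 -> tB < tA ->
  ~ ramsey_prop (@chain3_le tA.+1 tB.+1 tC.+1) (@Qn_le n) N.
Proof.
move=> hN hAB H.
pose col (X : {set 'I_N}) := (#|X| <= 1) || (n.+2 <= #|X|).
case: (H col) => [[f [[finj fle] fb]]|[g [[ginj gle] gr]]]; last first.
  pose Si i := [set j : 'I_n | j < i].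
  have prop i : i < n -> g (Si i) \proper g (Si i.+1).
    move=> hi; rewrite properE -!gle /Qn_le; apply/andP; split.
      by apply/subsetP => x; rewrite !inE => /ltnW.
    by apply/subsetPn; exists (Ordinal hi); rewrite !inE /= ?ltnn.
  have cardg i : i <= n -> #|g (Si 0)| + i <= #|g (Si i)|.
    elim: i => [|i IH] hi; first by rewrite addn0.
    have := proper_card (prop i hi); have := IH (ltnW hi); lia.
  have := cardg n (leqnn n); have := gr (Si 0); have := gr (Si n); rewrite /col.
  lia.
pose oth (x : chain3 tA.+1 tB.+1 tC.+1) : chain3 tA.+1 tB.+1 tC.+1 :=
  match x with inl (inl _) => inl (inr ord0) | inl (inr _) => inr ord0
    | inr _ => inl (inl ord0) end.
have oth1 x : chain3_le x (oth x) = false by case: x => [[]|].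
have oth2 x : chain3_le (oth x) x = false by case: x => [[]|].
have nle x y : chain3_le x y = false -> ~~ (f x \subset f y).
  by move=> E; rewrite -fle E.
have nz x : 0 < #|f x|.
  rewrite card_gt0; apply/negP => /eqP E.
  by move: (nle _ _ (oth1 x)); rewrite E sub0set.
have nf x : #|f x| < N.
  have : f x \proper setT.
    rewrite properE subsetT /=; apply/negP => sT.
    by move: (nle _ _ (oth2 x)); rewrite (subset_trans (subsetT _) sT).
  by move/proper_card; rewrite cardsT card_ord.
pose r (X : {set 'I_N}) := #|X| - n.+1.
have incr x y : chain3_le x y -> x != y -> r (f x) < r (f y).
  move=> le ne.
  have : f x \proper f y.
    rewrite properE -fle le /=; apply/negP => sub.
    by move/negP: ne; apply; apply/eqP; apply: finj; apply/eqP; rewrite eqEsubset -!fle le /= fle.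
  move/proper_card; have := fb x; have := fb y; have := nz x; rewrite /r /col; lia.
pose gA i := r (f (inl (inl (inord i)))).
have gAi : forall i, i < tA -> gA i < gA i.+1.
  move=> i hi; apply: incr => /=; first by rewrite !inordK //; lia.
  apply/negP => /eqP [] /(congr1 val); rewrite /= !inordK //; lia.
have cA := incr_chain gAi (leqnn tA).
have := nf (inl (inl (inord tA))); rewrite -/(gA tA) => nfA.
set a0 := f (inl (inl (inord 0))).
set aT := f (inl (inl (inord tA))).
have ca0 : #|a0| == 1.
  have := fb (inl (inl (inord 0))); have := nz (inl (inl (inord 0))).
  move: cA nfA; rewrite /gA /r /col -/a0 -/aT; lia.
have caT : #|~: aT| == 1.
  have := cardsC aT; rewrite card_ord.
  move: cA nfA; rewrite /gA /r -/a0 -/aT; lia.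
case/cards1P: ca0 => a Ea.
case/cards1P: caT => u Eu.
have propBC x : (if x is inl (inl _) then false else true) ->
    (a \notin f x) && (u \in f x).
  move=> hx.
  have [h1 h2] : (chain3_le (inl (inl (inord 0))) x = false) /\ (chain3_le x (inl (inl (inord tA))) = false) by case: x hx => [[]|].
  apply/andP; split.
    apply/negP => ax.
    by move: h1; move/nle; rewrite -/a0 Ea sub1set ax.
  move: h2; move/nle; rewrite -/aT => /subsetPn [w wx waT].
  have : w \in ~: aT by rewrite inE.
  by rewrite Eu inE => /eqP <-.
set w := f (inr ord0).
have /andP [aw uw] := propBC (inr ord0) isT.
set b0 := f (inl (inr (inord 0))).
have /andP [ab0 ub0] := propBC (inl (inr (inord 0))) isT.
have := fb (inl (inr (inord 0))); rewrite /col -/b0 => /orP [cb0|cb0].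
  have : #|b0| == 1 by have := nz (inl (inr (inord 0))); rewrite -/b0; lia.
  case/cards1P => v Ev.
  have := nle (inl (inr (inord 0))) (inr ord0) erefl.
  rewrite -/b0 -/w Ev sub1set.
  by move: ub0 uw; rewrite -/b0 -/w Ev inE => /eqP -> ->.
pose gB i := r (f (inl (inr (inord i)))).
have gBi : forall i, i < tB -> gB i < gB i.+1.
  move=> i hi; apply: incr => /=; first by rewrite !inordK //; lia.
  apply/negP => /eqP [] /(congr1 val); rewrite /= !inordK //; lia.
have cB := incr_chain gBi (leqnn tB).
set bT := f (inl (inr (inord tB))).
have /andP [abT _] := propBC (inl (inr (inord tB))) isT.
have EbT : bT = [set~ a].
  apply/eqP; rewrite eqEcard cardsC1 card_ord; apply/andP; split.
    by apply/subsetP => x xb; rewrite in_setC1; apply/negP => /eqP E; rewrite -E xb in abT.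
  move: cB cb0; rewrite /gB /r -/b0 -/bT; lia.
have := nle (inr ord0) (inl (inr (inord tB))) erefl.
rewrite -/w -/bT EbT => /negP; apply.
by apply/subsetP => x xw; rewrite in_setC1; apply/negP => /eqP E; rewrite -E xw in aw.
Qed.

Theorem theorem6 (n t t' : nat) :
  (0 < n)%N -> (0 < t)%N -> (0 < t')%N -> (t' <= t - 1)%N ->
  is_ramsey_number (@chain3_le t (t - 1) t') (@Qn_le n) (n + t + 2).
Proof.
move=> hn ht ht' htt'; split.
  by apply: upper; lia.
move=> N hN.
case: t ht htt' hN => [|[|tB]] //.
  by move=> _; move: ht'; lia.
case: t' ht' => [//|tC] _ htt' hN.
have -> : (tB.+2 - 1 = tB.+1)%N by rewrite subn1.
move=> hN2.
apply: (@lower n N tB.+1 tB tC); lia.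
Qed.
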